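(* For every connected graph $G$ of order $n\geq 2$, $\mathrm{ldim}_f(G)\leq \frac{n}{2}$.
   Context: All graphs are finite, simple and connected; $d$ is the shortest-path distance. For an edge $uv$, $L(uv)=\{x\in V(G): d(u,x)\neq d(v,x)\}$. A function $f:V(G)\to[0,1]$ is a local resolving function of $G$ if $\sum_{x\in L(uv)}f(x)\geq 1$ for every edge $uv$; $\mathrm{ldim}_f(G)$ is the minimum of $\sum_{v}f(v)$ over all local resolving functions. *)

(* Defs.v *)
From HB Require Import structures.
From mathcomp Require Import all_boot all_order all_algebra.
Set Implicit Arguments. Unset Strict Implicit. Unset Printing Implicit Defensive.
Import Order.TTheory GRing.Theory Num.Theory.

Definition simple_graph (T : finType) (e : rel T) : Prop :=
  symmetric e /\ irreflexive e.

Definition connected_graph (T : finType) (e : rel T) : Prop :=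
  forall u v : T, connect e u v.

Definition walk_of_len (T : finType) (e : rel T) (u v : T) (k : nat) : bool :=
  [exists p : k.-tuple T, path e u p && (last u p == v)].

(* Shortest-path distance: least k such that a walk of length k from u to v
   exists (shortest walks are paths). For connected graphs such a k < #|T|
   always exists; otherwise the value is #|T| (irrelevant here). *)
Definition dist (T : finType) (e : rel T) (u v : T) : nat :=
  find (walk_of_len e u v) (iota 0 #|T|).

Definition Lset (T : finType) (e : rel T) (u v : T) : {set T} :=
  [set x | dist e u x != dist e v x].

Definition local_resolving_fun (R : realFieldType) (T : finType) (e : rel T)
    (f : T -> R) : Prop :=
  (forall x, 0 <= f x <= 1)%R /\
  (forall u v, e u v -> (1 <= \sum_(x in Lset e u v) f x)%R).

(* ldim_f(G) <= c, i.e. the minimum weight of a local resolving function is at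
   most c (the minimum is attained, being an LP optimum). *)
Definition ldimf_le (R : realFieldType) (T : finType) (e : rel T) (c : R) : Prop :=
  exists f : T -> R, local_resolving_fun e f /\ (\sum_x f x <= c)%R.

(* Main.v *)
Require Import Defs.
From HB Require Import structures.
From mathcomp Require Import all_boot all_order all_algebra.
From mathcomp Require Import lra.
Import Order.TTheory GRing.Theory Num.Theory.
Local Open Scope ring_scope.

Lemma dist_self (T : finType) (e : rel T) (u : T) :
  (0 < #|T|)%N -> dist e u u = 0%N.
Proof.
move=> hT; rewrite /dist; case: #|T| hT => // n _ /=.
have -> : walk_of_len e u u 0 by apply/existsP; exists [tuple]; rewrite /= eqxx.
by [].
Qed.

Lemma dist_neq0 (T : finType) (e : rel T) (u v : T) :
  u != v -> (0 < #|T|)%N -> dist e u v != 0%N.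
Proof.
move=> huv hT; rewrite /dist; case: #|T| hT => // n _ /=.
have -> : walk_of_len e u v 0 = false.
  apply/existsP => -[p]; rewrite (tuple0 p) /= => /eqP h.
  by rewrite h eqxx in huv.
by [].
Qed.

Theorem corollary2p9 (R : realFieldType) (T : finType) (e : rel T) :
  simple_graph e -> connected_graph e -> (2 <= #|T|)%N ->
  ldimf_le e ((#|T|%:R : R) / 2).
Proof.
move=> [hsym hirr] _ hT.
have hT0 : (0 < #|T|)%N by apply: leq_trans hT.
exists (fun _ => 1 / 2); split; last first.
  by rewrite sumr_const -mulr_natr; lra.
split; first by move=> _; apply/andP; split; lra.
move=> u v huv.
have neq : u != v by apply/eqP => h; rewrite h hirr in huv.
have sub : [set u; v] \subset Lset e u v.
  apply/subsetP => x; rewrite /Lset !inE => /orP[] /eqP ->.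
    rewrite dist_self // eq_sym; apply: dist_neq0 => //; by rewrite eq_sym.
  rewrite dist_self //; exact: dist_neq0.
have hc : (2 <= #|Lset e u v|)%N.
  by have := subset_leq_card sub; rewrite cards2 neq.
rewrite sumr_const -mulr_natr.
have : (2%:R : R) <= #|Lset e u v|%:R by rewrite ler_nat.
lra.
Qed.
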